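(* Let $n\ge1$, $k\ge1$, and let $((i_1\,j_1),\dots,(i_k\,j_k))\in(\mathsf T_n)^k$ (with $i_l<j_l$ for all $l$) satisfy $i_1\le i_2\le\dots\le i_k$. The following are equivalent: 1. $((i_1\,j_1),\dots,(i_k\,j_k))\in\Sigma_n(k)$. 2. For all $l,m\in\{1,\dots,k\}$ with $l<m$, either $j_l\le i_m$ or $j_l>j_m$.
   Context: Let $n\ge1$. $\mathfrak S_n$ is the symmetric group on $\{1,\dots,n\}$; products of permutations are composed from right to left. $\mathsf T_n$ denotes the set of transpositions; a transposition is always written $(i\,j)$ with $i<j$. For $\sigma\in\mathfrak S_n$, $\ell(\sigma)$ is the number of cycles of $\sigma$ (fixed points counted) and $|\sigma|=n-\ell(\sigma)$. Write $\sigma_1\preccurlyeq\sigma_2$ iff $|\sigma_2|=|\sigma_1|+|\sigma_1^{-1}\sigma_2|$. For $k\ge0$, $\Sigma_n(k)=\{(\tau_1,\dots,\tau_k)\in(\mathsf T_n)^k : |\tau_1\cdots\tau_k|=k,\ \tau_1\cdots\tau_k\preccurlyeq(1\,2\,\dots\,n)\}$. *)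

(* Defs.v *)
(* Points {1..n} are represented by 'I_n = {0..n-1} (shift by 1). *)
From HB Require Import structures.
From mathcomp Require Import all_boot all_order all_fingroup.
Set Implicit Arguments. Unset Strict Implicit. Unset Printing Implicit Defensive.
Local Open Scope group_scope.

Definition pabs n (s : 'S_n) : nat := (n - #|porbits s|)%N.

(* Paper composes right to left: (s1 s2)(x) = s1 (s2 x).  In MathComp,
   (s * t) x = t (s x), so paper's s1 s2 is MathComp's s2 * s1. *)
Definition pcomp n (s1 s2 : 'S_n) : 'S_n := s2 * s1.

Definition pprec n (s1 s2 : 'S_n) : bool :=
  pabs s2 == (pabs s1 + pabs (pcomp s1^-1 s2))%N.

Definition rprod n (s : seq 'S_n) : 'S_n := foldr (@pcomp n) 1 s.

(* the long cycle (1 2 ... n): i |-> i+1 mod n *)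
Definition long_cycle n : 'S_n := perm (can_inj (@ordSK n)).

Definition inSigma n (ts : seq 'S_n) : bool :=
  (pabs (rprod ts) == size ts) && pprec (rprod ts) (long_cycle n).

(* Main.v *)
From Stdlib Require Import Lia.
Require Import Defs.
From HB Require Import structures.
From mathcomp Require Import all_boot all_order all_fingroup.

Set Implicit Arguments. Unset Strict Implicit. Unset Printing Implicit Defensive.

Ltac tonat := repeat match goal with
 | H : is_true (_ <= _) |- _ => apply (elimT leP) in H
 | H : is_true (~~ (_ <= _)) |- _ => apply (elimT negP) in H
 | H : ~ is_true (_ <= _) |- _ => let H' := fresh in assert (H' := fun h => H (introT leP h)); clear H
 | H : is_true (_ == _) |- _ => apply (elimT eqP) in H
 | H : is_true (_ != _) |- _ => let H' := fresh in assert (H' := elimN eqP H); clear H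
 | H : is_true (_ && _) |- _ => let H1 := fresh in let H2 := fresh in destruct (andP H) as [H1 H2]; clear H
 | |- is_true (_ <= _) => apply/leP
 | |- is_true (_ && _) => apply/andP; split
 | |- is_true (~~ _) => apply/negP
 | |- ~ is_true (_ <= _) => let h := fresh in intro h; apply (elimT leP) in h; revert h
 | |- forall _, _ => intro
 | H : is_true false |- _ => exfalso; exact (notF H)
 | H : is_true true |- _ => clear H
 | H : _ \/ _ |- _ => destruct H
 | H : is_true (_ || _) |- _ => case/orP: H
 | |- is_true (_ || _) => apply/negPn/negP; intro
 | H : is_true (~~ (_ || _)) |- _ => rewrite negb_or in H
 | H : is_true (~~ (_ && _)) |- _ => rewrite negb_and in H
 | H : is_true (~~ ~~ _) |- _ => rewrite negbK in H
 | H : ?b = false |- _ => apply (introT negPf) in H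
 | H : ?b = true |- _ => change (is_true b) in H
 | |- ~ _ => intro
 end.
Ltac nlia := tonat; change (nat_of_bool true) with 1 in *; change (nat_of_bool false) with 0 in *; repeat match goal with H : context[double _] |- _ => rewrite -addnn in H | |- context[double _] => rewrite -addnn end; try unfold addn, addn_rec, subn, subn_rec, muln, muln_rec in *; lia.

Lemma rprod_rcons n (s : seq 'S_n) t : rprod (rcons s t) = (t * rprod s)%g.
Proof.
elim: s => [|x s IH]; first by rewrite /rprod /= /Defs.pcomp mul1g mulg1.
rewrite rcons_cons /rprod /= -/(rprod _) IH; rewrite /Defs.pcomp; by rewrite mulgA.
Qed.

Definition tl n (A B : nat -> 'I_n) l : 'S_n := tperm (A l) (B l).
Definition Pm n (A B : nat -> 'I_n) m : 'S_n := rprod [seq tl A B l | l <- iota 0 m].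
Definition Qm n (A B : nat -> 'I_n) m : 'S_n := (long_cycle n * (Pm A B m)^-1)%g.

Lemma iotaS0 m : iota 0 m.+1 = rcons (iota 0 m) m.
Proof. by rewrite -addn1 iotaD add0n cats1. Qed.

Lemma Pm_S n (A B : nat -> 'I_n) m : Pm A B m.+1 = (tl A B m * Pm A B m)%g.
Proof. by rewrite /Pm iotaS0 map_rcons rprod_rcons. Qed.

Lemma Pm_0 n (A B : nat -> 'I_n) : Pm A B 0 = 1%g.
Proof. by []. Qed.

Lemma Qm_S n (A B : nat -> 'I_n) m : Qm A B m.+1 = (Qm A B m * tl A B m)%g.
Proof. by rewrite /Qm Pm_S invMg /tl tpermV mulgA. Qed.

Lemma Qm_0 n (A B : nat -> 'I_n) : Qm A B 0 = long_cycle n.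
Proof. by rewrite /Qm Pm_0 invg1 mulg1. Qed.

Lemma porbit_fix n (s : 'S_n) x y : s x = x -> y \in porbit s x -> y = x.
Proof. by move=> sx /porbitP[i ->]; rewrite permX_fix. Qed.

Lemma card_porbits_le n (s : 'S_n) : #|porbits s| <= n.
Proof. by rewrite /porbits (leq_trans (leq_imset_card _ _)) // card_ord. Qed.

Lemma card_porbits1 n : #|porbits (1 : 'S_n)%g| = n.
Proof.
rewrite /porbits card_imset ?card_ord // => x y E.
have : y \in porbit 1 x by rewrite E porbit_id.
by move/(porbit_fix (perm1 x)).
Qed.

Lemma long_cycleX n (x : 'I_n) i : val ((long_cycle n ^+ i)%g x) = (x + i) %% n.
Proof.
elim: i => [|i IH]; first by rewrite expg0 perm1 addn0 modn_small.
rewrite expgSr permM /long_cycle permE /= IH.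
by rewrite addnS -[(x+i).+1]addn1 -[((x + i) %% n).+1]addn1 modnDml.
Qed.

Lemma card_porbits_c n : 0 < n -> #|porbits (long_cycle n)| = 1.
Proof.
move=> n0; have E : forall x : 'I_n, porbit (long_cycle n) x = setT.
  move=> x; apply/setP=> y; rewrite inE; apply/porbitP; exists (y + n - x).
  apply: val_inj; rewrite long_cycleX.
  have -> : x + (y + n - x) = y + n by have := ltn_ord x; nlia.
  by rewrite modnDr modn_small.
rewrite /porbits.
have -> : [set porbit (long_cycle n) x | x : 'I_n] = [set setT].
  apply/setP=> S; rewrite inE; apply/imsetP/eqP => [[x _ ->]|->]; first by rewrite E.
  by exists (Ordinal n0); rewrite ?E.
by rewrite cards1.
Qed.
Definition Cnd n (A B : nat -> 'I_n) m :=
  forall l m', l < m' -> m' < m -> (B l <= A m') \/ (B m' < B l).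

Lemma Cnd_S n (A B : nat -> 'I_n) m : Cnd A B m.+1 -> Cnd A B m.
Proof. by move=> H l m' h1 h2; apply: H => //; apply: ltnW. Qed.

Lemma ord_neq n (x y : 'I_n) : nat_of_ord x != nat_of_ord y -> x != y.
Proof. by apply: contra => /eqP ->. Qed.

Lemma Pm_fix n (A B : nat -> 'I_n) k
  (hAB : forall l, l < k -> A l < B l)
  (hsort : forall l m, l <= m -> m < k -> A l <= A m) m :
  m < k -> Cnd A B m.+1 -> forall j, j <= m -> Pm A B j (B m) = B m.
Proof.
move=> mk C; elim=> [|j IH] jm; first by rewrite Pm_0 perm1.
rewrite Pm_S permM /tl tpermD ?IH ?(ltnW jm) //; apply: ord_neq.
  have := hsort j m (ltnW jm) mk; have := hAB m mk; nlia.
have := C j m jm (ltnSn m); have := hAB m mk; nlia.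
Qed.

Lemma card_Pm n (A B : nat -> 'I_n) k
  (hAB : forall l, l < k -> A l < B l)
  (hsort : forall l m, l <= m -> m < k -> A l <= A m) m :
  m <= k -> Cnd A B m -> #|porbits (Pm A B m)| + m = n.
Proof.
elim: m => [|m IH] mk C; first by rewrite Pm_0 card_porbits1 addn0.
have H : #|porbits (tl A B m * Pm A B m)%g| + (A m \notin porbit (Pm A B m) (B m)).*2
  = #|porbits (Pm A B m)| + (A m != B m) := porbits_mul_tperm _ _ _.
have Hf := Pm_fix hAB hsort mk C (leqnn m).
have E1 : (A m \notin porbit (Pm A B m) (B m)) = true.
  apply/negP => /(porbit_fix Hf) E; have := hAB m mk; rewrite E ltnn //.
have E2 : (A m != B m) = true by apply: ord_neq; have := hAB m mk; nlia.
rewrite E1 E2 -Pm_S in H.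
have := IH (ltnW mk) (Cnd_S C); nlia.
Qed.

Lemma card_Qm_step n (A B : nat -> 'I_n) m : A m != B m ->
  #|porbits (Qm A B m.+1)| + (A m \notin porbit (Qm A B m) (B m)).*2 =
  #|porbits (Qm A B m)| + 1.
Proof.
move=> ne; rewrite Qm_S -porbitsV invMg /tl tpermV.
have := porbits_mul_tperm (Qm A B m)^-1 (A m) (B m).
by rewrite porbitsV ne porbitV.
Qed.

Lemma card_Qm_le n (A B : nat -> 'I_n) k (hAB : forall l, l < k -> A l < B l) m :
  0 < n -> m <= k -> #|porbits (Qm A B m)| <= m.+1.
Proof.
move=> n0; elim: m => [|m IH] mk; first by rewrite Qm_0 card_porbits_c.
have ne : A m != B m by apply: ord_neq; have := hAB m mk; nlia.
have := card_Qm_step ne; have := IH (ltnW mk).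
case: (_ \notin _) => /=; nlia.
Qed.

Definition dist n (x y : nat) := if x < y then y - x else y + n - x.

Ltac dsolve := rewrite /dist; repeat match goal with |- context[if ?a < ?b then _ else _] => case: (ltnP a b) end; nlia.

Lemma dist_ge1 n x y : x < n -> 0 < dist n x y. Proof. dsolve. Qed.
Lemma dist_xx n x : dist n x x = n. Proof. dsolve. Qed.
Lemma dist_lt n x y : x < n -> y < n -> x != y -> dist n x y < n. Proof. dsolve. Qed.
Lemma dist_inj n x y z : x < n -> y < n -> z < n -> dist n x y = dist n x z -> y = z.
Proof. dsolve. Qed.
Lemma dist_step n x x' y : x < n -> x' < n -> y < n -> x != x' ->
  dist n x x' < dist n x y -> dist n x' y < dist n x y.
Proof. dsolve. Qed.
Lemma c1 n a b x y : a < b -> b < n -> x < n -> y < n -> a <= x < b -> (y < a) || (b < y) ->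
  dist n x b < dist n x y.
Proof. dsolve. Qed.
Lemma c2 n a b x y : a < b -> b < n -> x < n -> y < n -> (x < a) || (b <= x) -> a < y < b ->
  dist n x a < dist n x y.
Proof. dsolve. Qed.
Lemma c3 n a b x : a < b -> b < n -> x < n -> a <= x < b -> dist n x b < dist n x a.
Proof. dsolve. Qed.
Lemma c4 n a b x : a < b -> b < n -> x < n -> (x < a) || (b <= x) -> dist n x a < dist n x b.
Proof. dsolve. Qed.
Lemma c5 n a b x z : a < b -> b < n -> x < n -> z < n -> (x < a) || (b <= x) ->
  dist n x a < dist n x z -> dist n x z < dist n x b -> a < z < b.
Proof. dsolve. Qed.
Lemma c6 n a b x z : a < b -> b < n -> x < n -> z < n -> a <= x < b ->
  dist n x b < dist n x z -> dist n x z < dist n x a -> (z < a) || (b < z).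
Proof. dsolve. Qed.
Definition inI n (A B : nat -> 'I_n) l (x : nat) := (A l <= x) && (x < B l).
Definition eqv n (A B : nat -> 'I_n) m (x y : nat) := forall l, l < m -> inI A B l x = inI A B l y.

Lemma eqv_refl n (A B : nat -> 'I_n) m x : eqv A B m x x. Proof. by []. Qed.
Lemma eqv_sym n (A B : nat -> 'I_n) m x y : eqv A B m x y -> eqv A B m y x.
Proof. by move=> H l lm; rewrite H. Qed.
Lemma eqv_trans n (A B : nat -> 'I_n) m x y z :
  eqv A B m x y -> eqv A B m y z -> eqv A B m x z.
Proof. by move=> H1 H2 l lm; rewrite H1 ?H2. Qed.
Lemma eqvS n (A B : nat -> 'I_n) m x y :
  eqv A B m.+1 x y <-> eqv A B m x y /\ inI A B m x = inI A B m y.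
Proof.
split=> [H|[H1 H2] l]; first by split; [move=> l lm; apply: H; apply: ltnW|apply: H].
rewrite ltnS leq_eqVlt => /orP[/eqP->//|]; exact: H1.
Qed.

Definition Inv n (A B : nat -> 'I_n) m := forall x : 'I_n,
  eqv A B m x (Qm A B m x) /\
  forall z : 'I_n, dist n x z < dist n x (Qm A B m x) -> ~ eqv A B m x z.

Lemma Inv0 n (A B : nat -> 'I_n) : Inv A B 0.
Proof.
move=> x; rewrite Qm_0; split=> [l //|z].
have Hc : (long_cycle n x : nat) = (x + 1) %% n by rewrite -(long_cycleX x 1) expg1.
have hx := ltn_ord x.
have D : dist n x (long_cycle n x) = 1.
  rewrite Hc; case: (ltnP x.+1 n) => h.
    rewrite modn_small ?addn1 //; rewrite /dist; case: ltnP; nlia.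
  have -> : x + 1 = n by nlia.
  rewrite modnn /dist; case: ltnP; nlia.
rewrite D; have := @dist_ge1 n x z hx; nlia.
Qed.

Lemma Kz n (A B : nat -> 'I_n) k
  (hsort : forall l m, l <= m -> m < k -> A l <= A m) m :
  m < k -> Cnd A B m.+1 -> forall z, A m <= z <= B m -> eqv A B m (A m) z.
Proof.
move=> mk C z hz l lm; rewrite /inI.
have := C l m lm (ltnSn m); have := hsort l m (ltnW lm) mk.
move=> h1 h2; apply/idP/idP; nlia.
Qed.

Lemma Inv_step n (A B : nat -> 'I_n) k
  (hAB : forall l, l < k -> A l < B l)
  (hsort : forall l m, l <= m -> m < k -> A l <= A m) m :
  m < k -> Cnd A B m.+1 -> Inv A B m -> Inv A B m.+1.
Proof.
move=> mk C IV x.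
have hab : A m < B m := hAB m mk.
have hbn := ltn_ord (B m). have hx := ltn_ord x.
have K := Kz hsort mk C.
have eab : eqv A B m (A m) (B m) by apply: K; rewrite leqnn ltnW.
have [H1 H2] := IV x.
rewrite Qm_S permM /tl.
have hyn := ltn_ord (Qm A B m x).
case: tpermP => [ya|yb|ya yb].
-
  rewrite ya in H1 H2.
  have exb : eqv A B m x (B m) := eqv_trans H1 eab.
  have xn : ~~ ((A m <= x) && (x < B m)).
    apply/negP => hx'; apply: (H2 (B m)) exb; exact: c3.
  split.
    apply/eqvS; split=> //; rewrite /inI (negbTE xn) ltnn andbF //.
  move=> z dz /eqvS [E1 E2]; rewrite /inI (negbTE xn) in E2.
  have hzn := ltn_ord z.
  case: (ltngtP (dist n x z) (dist n x (A m))) => dd.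
  + exact: (H2 z dd E1).
  + have xo : (x < A m) || (B m <= x) by move: xn; rewrite negb_and -ltnNge -leqNgt.
    have /andP[h1 h2] := c5 hab hbn hx hzn xo dd dz.
    by move: E2; rewrite (ltnW h1) h2.
  + have Ez := dist_inj hx (ltn_ord z) (ltn_ord (A m)) dd.
    by move: E2; rewrite Ez leqnn hab.
-
  rewrite yb in H1 H2.
  have exa : eqv A B m x (A m) := eqv_trans H1 (eqv_sym eab).
  have xin : (A m <= x) && (x < B m).
    apply/negPn/negP => xn'; apply: (H2 (A m)) exa; apply: c4 => //.
    by move: xn'; rewrite negb_and -ltnNge -leqNgt.
  split.
    apply/eqvS; split=> //; rewrite /inI xin leqnn hab //.
  move=> z dz /eqvS [E1 E2]; rewrite /inI xin in E2.
  have hzn := ltn_ord z.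
  case: (ltngtP (dist n x z) (dist n x (B m))) => dd.
  + exact: (H2 z dd E1).
  + have := c6 hab hbn hx hzn xin dd dz.
    have /andP[h1 h2] : (A m <= z) && (z < B m) by rewrite -E2.
    nlia.
  + have Ez := dist_inj hx (ltn_ord z) (ltn_ord (B m)) dd.
    by move: E2; rewrite Ez ltnn andbF.
-
  have ya' : (Qm A B m x : nat) != A m by apply/eqP => E; apply: ya; apply: val_inj.
  have yb' : (Qm A B m x : nat) != B m by apply/eqP => E; apply: yb; apply: val_inj.
  split; last first.
    by move=> z dz /eqvS [E _]; exact: H2 z dz E.
  apply/eqvS; split=> //; rewrite /inI.
  case Ex: ((A m <= x) && (x < B m)); case Ey: ((A m <= Qm A B m x) && (Qm A B m x < B m)) => //.
  + exfalso; apply: (H2 (B m)); last by apply: eqv_trans (eqv_sym (K x _)) eab; nlia.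
    apply: (@c1 n (A m) (B m)); nlia.
  + exfalso; apply: (H2 (A m)); last by apply: eqv_trans H1 (eqv_sym (K _ _)); nlia.
    apply: (@c2 n (A m) (B m)); nlia.
Qed.

Lemma orbit_of_eqv n (A B : nat -> 'I_n) m : Inv A B m ->
  forall x y : 'I_n, eqv A B m x y -> y \in porbit (Qm A B m) x.
Proof.
move=> IV; suff: forall d (x y : 'I_n), dist n x y <= d -> eqv A B m x y ->
    y \in porbit (Qm A B m) x by move=> H x y; apply: H (leqnn _).
elim=> [|d IH] x y hd E.
  by have := @dist_ge1 n x y (ltn_ord x); rewrite leqNgt (leq_ltn_trans hd) ?ltnSn.
case: (eqVneq x y) => [->|nxy]; first exact: porbit_id.
have Q1 := mem_porbit (Qm A B m) 1 x; rewrite expg1 in Q1.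
case: (eqVneq (Qm A B m x) y) => [<- //|nx'y].
have [H1 H2] := IV x.
have hx := ltn_ord x; have hy := ltn_ord y; have hx' := ltn_ord (Qm A B m x).
have nd : ~~ (dist n x y < dist n x (Qm A B m x)).
  by apply/negP => /H2; apply.
have ne : dist n x y != dist n x (Qm A B m x).
  apply/negP => /eqP /(dist_inj hx hy hx') E'; move/eqP: nx'y; apply; exact: val_inj.
have lt : dist n x (Qm A B m x) < dist n x y by move: nd ne; nlia.
have xx' : (x : nat) != Qm A B m x.
  apply/negP => /eqP E'; move: lt; rewrite -E' dist_xx.
  have := dist_lt hx hy (ord_neq nxy) ; nlia.
have := dist_step hx hx' hy xx' lt => lt'.
have := IH (Qm A B m x) y _ (eqv_trans (eqv_sym H1) E).
have -> : porbit (Qm A B m) (Qm A B m x) = porbit (Qm A B m) x.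
  by have := porbit_perm (Qm A B m) 1 x; rewrite expg1.
apply; nlia.
Qed.

Lemma eqv_of_orbit n (A B : nat -> 'I_n) m : Inv A B m ->
  forall x y : 'I_n, y \in porbit (Qm A B m) x -> eqv A B m x y.
Proof.
move=> IV x y /porbitP[i ->]; elim: i => [|i IH]; first by rewrite expg0 perm1.
rewrite expgSr permM; apply: eqv_trans IH _; exact: (IV _).1.
Qed.

Lemma Cnd_step n (A B : nat -> 'I_n) k
  (hAB : forall l, l < k -> A l < B l)
  (hsort : forall l m, l <= m -> m < k -> A l <= A m) m :
  m < k -> Cnd A B m -> (Cnd A B m.+1 <-> eqv A B m (A m) (B m)).
Proof.
move=> mk C; split=> [C' l lm | E l m' lm' ].
  have := C' l m lm (ltnSn m); have := hsort l m (ltnW lm) mk; have := hAB m mk.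
  rewrite /inI; move=> h1 h2 h3; apply/idP/idP; nlia.
rewrite ltnS leq_eqVlt => /orP[/eqP E'|]; last exact: C. subst m'.
have := E l lm'; rewrite /inI.
have hl := hsort l m (ltnW lm') mk; have hm := hAB m mk.
case: (leqP (B l) (A m)) => h; [by left | right].
by rewrite hl /= in H; case/andP: (esym H).
Qed.

Lemma Inv_all n (A B : nat -> 'I_n) k
  (hAB : forall l, l < k -> A l < B l)
  (hsort : forall l m, l <= m -> m < k -> A l <= A m) m :
  m <= k -> Cnd A B m -> Inv A B m.
Proof.
elim: m => [|m IH] mk C; first exact: Inv0.
apply: (Inv_step hAB hsort mk C); exact: IH (ltnW mk) (Cnd_S C).
Qed.

Lemma card_Qm_cnd n (A B : nat -> 'I_n) k
  (hAB : forall l, l < k -> A l < B l)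
  (hsort : forall l m, l <= m -> m < k -> A l <= A m) m :
  0 < n -> m <= k -> Cnd A B m -> #|porbits (Qm A B m)| = m.+1.
Proof.
move=> n0; elim: m => [|m IH] mk C; first by rewrite Qm_0 card_porbits_c.
have Cm := Cnd_S C.
have IV := Inv_all hAB hsort (ltnW mk) Cm.
have E := (Cnd_step hAB hsort mk Cm).1 C.
have ne : A m != B m by apply: ord_neq; have := hAB m mk; nlia.
have := card_Qm_step ne.
have -> : (A m \notin porbit (Qm A B m) (B m)) = false.
  by rewrite porbit_sym (orbit_of_eqv IV E).
have := IH (ltnW mk) Cm; nlia.
Qed.

Lemma cnd_of_card n (A B : nat -> 'I_n) k
  (hAB : forall l, l < k -> A l < B l)
  (hsort : forall l m, l <= m -> m < k -> A l <= A m) m :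
  0 < n -> m <= k -> #|porbits (Qm A B m)| = m.+1 -> Cnd A B m.
Proof.
move=> n0; elim: m => [|m IH] mk hc; first by move=> l m' _; rewrite ltn0.
have ne : A m != B m by apply: ord_neq; have := hAB m mk; nlia.
have H := card_Qm_step ne.
have hle := card_Qm_le hAB n0 (ltnW mk).
case E: (A m \notin porbit (Qm A B m) (B m)) H => H.
  exfalso; move: H hle; rewrite hc; nlia.
have Cm : Cnd A B m by apply: IH (ltnW mk) _; move: H; rewrite hc; nlia.
have IV := Inv_all hAB hsort (ltnW mk) Cm.
apply/(Cnd_step hAB hsort mk Cm); apply: eqv_sym.
apply: (eqv_of_orbit IV); by move/negbFE: E.
Qed.

Theorem proposition3p5 (n k : nat) (hn : (1 <= n)%N) (hk : (1 <= k)%N)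
    (I J : 'I_k -> 'I_n)
    (hIJ : forall l : 'I_k, (I l < J l)%N)
    (hsort : forall l m : 'I_k, (l <= m)%N -> (I l <= I m)%N) :
  inSigma [seq tperm (I l) (J l) | l <- enum 'I_k] <->
  (forall l m : 'I_k, (l < m)%N -> (J l <= I m)%N \/ (J m < J l)%N).
Proof.
pose o : 'I_k := Ordinal hk.
pose A l := I (insubd o l). pose B l := J (insubd o l).
have AE : forall l : 'I_k, A l = I l by move=> l; rewrite /A valKd.
have BE : forall l : 'I_k, B l = J l by move=> l; rewrite /B valKd.
have AO : forall l (h : l < k), A l = I (Ordinal h).
  by move=> l h; rewrite /A; congr I; apply: val_inj; rewrite /= val_insubd h.
have BO : forall l (h : l < k), B l = J (Ordinal h).
  by move=> l h; rewrite /B; congr J; apply: val_inj; rewrite /= val_insubd h.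
have hAB' : forall l, l < k -> A l < B l by move=> l _; exact: hIJ.
have hsort' : forall l m, l <= m -> m < k -> A l <= A m.
  move=> l m lm mk; apply: hsort; rewrite !val_insubd (leq_ltn_trans lm mk) mk //.
have seqE : [seq tperm (I l) (J l) | l <- enum 'I_k] = [seq tl A B l | l <- iota 0 k].
  by rewrite -val_enum_ord -map_comp; apply: eq_map => l /=; rewrite /tl AE BE.
have condE : (forall l m : 'I_k, l < m -> J l <= I m \/ J m < J l) <-> Cnd A B k.
  split => H.
    move=> l m lm mk; have lk := ltn_trans lm mk.
    by rewrite (AO m mk) (BO l lk) (BO m mk); apply: H.
  by move=> l m lm; have := H l m lm (ltn_ord m); rewrite !AE !BE.
rewrite condE /inSigma seqE.
have -> : rprod [seq tl A B l | l <- iota 0 k] = Pm A B k by [].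
rewrite size_map size_iota /pprec.
have -> : Defs.pcomp (Pm A B k)^-1 (long_cycle n) = Qm A B k by [].
have hc := card_porbits_c hn.
have hQ := card_porbits_le (Qm A B k); have hP := card_porbits_le (Pm A B k).
rewrite /pabs hc.
split.
  move/andP=> [/eqP h1 /eqP h2]; apply: (cnd_of_card hAB' hsort' hn (leqnn k)).
  have := card_Qm_le hAB' hn (leqnn k); nlia.
move=> C.
have h1 := card_Pm hAB' hsort' (leqnn k) C.
have h2 := card_Qm_cnd hAB' hsort' hn (leqnn k) C.
apply/andP; split; apply/eqP; nlia.
Qed.
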